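(* Let $c\in\mathbb{N}$ and $I=\mathbb{N}\times[c]$. Then every $\mathrm{Sym}$-invariant lattice $L\subseteq\mathbb{Z}^{(I)}$ has (i) a finite equivariant universal Gröbner basis, (ii) a finite equivariant Gröbner basis with respect to an arbitrary term order on $\mathbb{Z}_{\ge0}^{(I)}$, (iii) a finite equivariant Markov basis, and (iv) a finite equivariant generating set.
   Context: $\mathbb{N}=\{1,2,\dots\}$. $\mathbb{Z}^{(I)}$ is the free abelian group with basis $I$ (standard basis $\mathbf{e}_{i,j}$), $\mathbb{Z}_{\ge0}^{(I)}$ its nonnegative vectors; a lattice is a subgroup. $\mathrm{Sym}$ is the group of permutations of $\mathbb{N}$ fixing all but finitely many points, acting by linear extension of $\sigma(\mathbf{e}_{i,j})=\mathbf{e}_{\sigma(i),j}$. Term order: additive well-ordering of $\mathbb{Z}_{\ge0}^{(I)}$. For $\mathbf{u}\in\mathbb{Z}_{\ge0}^{(I)}$, $F_L(\mathbf{u})=\{\mathbf{v}\ge\mathbf{0}\mid\mathbf{u}-\mathbf{v}\in L\}$. For $\mathcal{B}\subseteq L$: generating set = generates $L$ as a group; Markov basis = for all $\mathbf{u}$, the graph on $F_L(\mathbf{u})$ with edges $\{\mathbf{v},\mathbf{w}\}$ for $\mathbf{v}-\mathbf{w}\in\pm\mathcal{B}$ is connected; Gröbner basis w.r.t. $\prec$ = for all $\mathbf{u}$ there is a directed path from $\mathbf{u}$ to the $\prec$-minimal element of $F_L(\mathbf{u})$ along edges $\mathbf{v}\to\mathbf{w}$ with $\mathbf{v}-\mathbf{w}\in\pm\mathcal{B}$,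 $\mathbf{w}\prec\mathbf{v}$; universal Gröbner basis = Gröbner basis w.r.t. all term orders. $\mathcal{B}$ is an equivariant X (for each of these notions) if $\mathrm{Sym}(\mathcal{B})=\{\sigma(\mathbf{b})\mid\sigma\in\mathrm{Sym},\mathbf{b}\in\mathcal{B}\}$ is an X. *)

(* Defs.v *)
From mathcomp Require Import all_boot all_order all_algebra.
From Stdlib Require Import Relation_Operators.
Set Implicit Arguments. Unset Strict Implicit. Unset Printing Implicit Defensive.
Import Order.TTheory GRing.Theory Num.Theory.
Local Open Scope ring_scope.

(* I = N x [c]; index k : nat stands for the k-th element of N (0-based
   relabelling), j : 'I_c for an element of [c]. *)
Definition vec (c : nat) := nat -> 'I_c -> int.

Definition vzero (c : nat) : vec c := fun _ _ => 0.
Arguments vzero : clear implicits.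
Definition vadd c (u v : vec c) : vec c := fun i j => u i j + v i j.
Definition vsub c (u v : vec c) : vec c := fun i j => u i j - v i j.

Definition finsupp c (v : vec c) : Prop :=
  exists N : nat, forall (i : nat) (j : 'I_c), (N <= i)%N -> v i j = 0.

Definition nonnegvec c (v : vec c) : Prop :=
  finsupp v /\ forall i j, 0 <= v i j.

Definition lattice c (L : vec c -> Prop) : Prop :=
  (forall v, L v -> finsupp v) /\ L (vzero c) /\
  (forall u v, L u -> L v -> L (vsub u v)).

Definition finperm (s : nat -> nat) : Prop :=
  bijective s /\ exists N : nat, forall i, (N <= i)%N -> s i = i.

(* w = s(v), where s(e_{i,j}) = e_{s(i),j} extended linearly *)
Definition act_rel c (s : nat -> nat) (v w : vec c) : Prop :=
  forall i j, w (s i) j = v i j.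

Definition sym_invariant c (L : vec c -> Prop) : Prop :=
  forall s v w, finperm s -> L v -> act_rel s v w -> L w.

Definition SymOrbit c n (B : 'I_n -> vec c) : vec c -> Prop :=
  fun w => exists (s : nat -> nat) (k : 'I_n), finperm s /\ act_rel s (B k) w.

Definition term_order c (prec : vec c -> vec c -> Prop) : Prop :=
  (forall u, nonnegvec u -> ~ prec u u) /\
  (forall u v w, nonnegvec u -> nonnegvec v -> nonnegvec w ->
     prec u v -> prec v w -> prec u w) /\
  (forall u v, nonnegvec u -> nonnegvec v -> prec u v \/ u = v \/ prec v u) /\
  (forall u v w, nonnegvec u -> nonnegvec v -> nonnegvec w ->
     prec u v -> prec (vadd u w) (vadd v w)) /\
  (forall S : vec c -> Prop, (forall v, S v -> nonnegvec v) -> (exists v, S v) ->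
     exists m, S m /\ forall v, S v -> ~ prec v m).

Definition fiber c (L : vec c -> Prop) (u : vec c) : vec c -> Prop :=
  fun v => nonnegvec v /\ L (vsub u v).

Definition edge c (L B : vec c -> Prop) (u : vec c) (v w : vec c) : Prop :=
  fiber L u v /\ fiber L u w /\ (B (vsub v w) \/ B (vsub w v)).

Definition dedge c (L B : vec c -> Prop) prec (u : vec c) (v w : vec c) : Prop :=
  edge L B u v w /\ prec w v.

Inductive gen c (B : vec c -> Prop) : vec c -> Prop :=
| gen0 : gen B (vzero c)
| genB : forall b, B b -> gen B b
| genS : forall x y, gen B x -> gen B y -> gen B (vsub x y).

Definition generating_set c (L B : vec c -> Prop) : Prop :=
  (forall b, B b -> L b) /\ (forall v, L v -> gen B v).

Definition markov_basis c (L B : vec c -> Prop) : Prop :=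
  (forall b, B b -> L b) /\
  forall u, nonnegvec u -> forall v w, fiber L u v -> fiber L u w ->
    clos_refl_trans (vec c) (edge L B u) v w.

Definition groebner_basis c (L B : vec c -> Prop) prec : Prop :=
  (forall b, B b -> L b) /\
  forall u, nonnegvec u -> forall m, fiber L u m ->
    (forall v, fiber L u v -> ~ prec v m) ->
    clos_refl_trans (vec c) (dedge L B prec u) u m.

Definition universal_groebner_basis c (L B : vec c -> Prop) : Prop :=
  forall prec, term_order prec -> groebner_basis L B prec.

(* Main.v *)
Require Import Defs.
From mathcomp Require Import all_boot all_order all_algebra.
From mathcomp Require Import zify.
From Stdlib Require Import Relation_Operators Classical ClassicalEpsilon FunctionalExtensionality.
Set Implicit Arguments. Unset Strict Implicit. Unset Printing Implicit Defensive.
Import Order.TTheory GRing.Theory Num.Theory.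

Lemma choicef A B (R : A -> B -> Prop) : (forall a, exists b, R a b) -> exists f, forall a, R a (f a).
Proof.
move=> H; exists (fun a => proj1_sig (constructive_indefinite_description _ (H a))).
move=> a; exact: proj2_sig (constructive_indefinite_description _ (H a)).
Qed.

Lemma dc T (x0 : T) (P : seq T -> T -> Prop) :
  (forall l, exists x, P l x) -> exists f : nat -> T, forall n, P (mkseq f n) (f n).
Proof.
move=> /choicef [pick Hp].
pose fix pre n := if n is m.+1 then rcons (pre m) (pick (pre m)) else [::].
exists (fun n => pick (pre n)).
have E n : pre n = mkseq (fun n => pick (pre n)) n.
  by elim: n => [|n IH] //=; rewrite mkseqS -IH.
by move=> n; rewrite -E.
Qed.

Lemma exists_min (Q : nat -> Prop) : (exists n, Q n) -> exists n, Q n /\ forall m, Q m -> (n <= m)%N.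
Proof.
case=> n Hn; elim: n {-2}n (leqnn n) Hn => [|n IH] k Hk Qk.
  exists k; split => // m _; lia.
case: (classic (exists m, (m < k)%N /\ Q m)) => [[m [Hm Qm]]|H].
  apply: (IH m) => //; lia.
exists k; split => // m Qm; case: (leqP k m) => // Hmk; exfalso; apply: H; exists m; split => //.
Qed.

Lemma mono_lt (phi : nat -> nat) : (forall n, phi n < phi n.+1)%N ->
  forall a b, (a < b)%N -> (phi a < phi b)%N.
Proof.
move=> H a b; elim: b => [|b IH] //= Hab.
case: (ltngtP a b) => [h|h|->]; last exact: H.
- exact: ltn_trans (IH h) (H b).
- lia.
Qed.

Lemma mono_le (phi : nat -> nat) : (forall n, phi n < phi n.+1)%N ->
  forall a b, (a <= b)%N -> (phi a <= phi b)%N.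
Proof.
move=> H a b; rewrite leq_eqVlt => /orP [/eqP->//|h]; apply: ltnW; exact: mono_lt.
Qed.

Lemma subseq_io (P : nat -> Prop) : (forall N, exists i, (N <= i)%N /\ P i) ->
  exists phi : nat -> nat, (forall n, phi n < phi n.+1)%N /\ forall n, P (phi n).
Proof.
move=> /choicef [nx Hnx].
pose phi := fix phi n := if n is m.+1 then nx (phi m).+1 else nx 0.
exists phi; split.
- move=> n /=; case: (Hnx (phi n).+1) => h _; lia.
- by case=> [|n] /=; [case: (Hnx 0) | case: (Hnx (phi n).+1)].
Qed.

Definition good T (R : T -> T -> Prop) (f : nat -> T) := exists i j, (i < j)%N /\ R (f i) (f j).
Definition wqo T (R : T -> T -> Prop) := forall f, good R f.
Definition trans T (R : T -> T -> Prop) := forall x y z, R x y -> R y z -> R x z.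

Lemma wqo_chain T (R : T -> T -> Prop) : wqo R -> forall f : nat -> T,
  exists phi, (forall n, phi n < phi n.+1)%N /\ forall n, R (f (phi n)) (f (phi n.+1)).
Proof.
move=> W f.
have [N HN] : exists N, forall i, (N <= i)%N -> exists j, (i < j)%N /\ R (f i) (f j).
  apply: NNPP => H.
  have : forall N, exists i, (N <= i)%N /\ forall j, (i < j)%N -> ~ R (f i) (f j).
    move=> N; apply: NNPP => H2; apply: H; exists N => i Hi; apply: NNPP => H3.
    apply: H2; exists i; split => // j Hj Rij; apply: H3; by exists j.
  move=> /subseq_io [psi [Hpsi Tpsi]].
  case: (W (fun n => f (psi n))) => a [b [Hab Rab]].
  exact: (Tpsi a (psi b) (mono_lt Hpsi Hab)).
have /choicef [g Hg] : forall i, exists j, (N <= i)%N -> (i < j)%N /\ R (f i) (f j).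
  move=> i; case: (classic (N <= i)%N) => Hi.
  - by case: (HN i Hi) => j Hj; exists j.
  - by exists 0.
pose phi := fix phi n := if n is m.+1 then g (phi m) else N.
have HphiN n : (N <= phi n)%N.
  elim: n => [|n IH] //=; case: (Hg _ IH) => h _; lia.
exists phi; split => n /=; by case: (Hg _ (HphiN n)).
Qed.

Lemma wqo_sub T (R : T -> T -> Prop) : trans R -> wqo R -> forall f : nat -> T,
  exists phi, (forall n, phi n < phi n.+1)%N /\ forall a b, (a < b)%N -> R (f (phi a)) (f (phi b)).
Proof.
move=> Tr W f; case: (wqo_chain W f) => phi [H1 H2]; exists phi; split => // a b.
elim: b => [|b IH] // Hab; case: (ltngtP a b) => [h|h|->]; last exact: H2.
- exact: Tr (IH h) (H2 b).
- lia.
Qed.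

Lemma wqo_nat : wqo (fun a b : nat => (a <= b)%N).
Proof.
move=> f; suff H : forall v i, (f i <= v)%N -> good (fun a b : nat => (a <= b)%N) f by exact: (H (f 0) 0 (leqnn _)).
elim=> [|v IH] i Hi.
  exists i, i.+1; split => //; lia.
case: (leqP (f i) (f i.+1)) => h; first by exists i, i.+1.
apply: (IH i.+1); lia.
Qed.

Lemma wqo_pull T U (R : U -> U -> Prop) (h : T -> U) : wqo R -> wqo (fun x y => R (h x) (h y)).
Proof. by move=> W f; case: (W (fun n => h (f n))) => i [j H]; exists i, j. Qed.

Lemma wqo_mono T (R R' : T -> T -> Prop) : (forall x y, R x y -> R' x y) -> wqo R -> wqo R'.
Proof. by move=> H W f; case: (W f) => i [j [? ?]]; exists i, j; split => //; apply: H. Qed.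

Lemma wqo_inter T (R1 R2 : T -> T -> Prop) : trans R1 -> wqo R1 -> wqo R2 ->
  wqo (fun x y => R1 x y /\ R2 x y).
Proof.
move=> Tr W1 W2 f; case: (wqo_sub Tr W1 f) => phi [Hm Hc].
case: (W2 (fun n => f (phi n))) => a [b [Hab R2ab]].
exists (phi a), (phi b); split; first exact: mono_lt.
split => //; exact: Hc.
Qed.

Inductive emb T (R : T -> T -> Prop) : seq T -> seq T -> Prop :=
| emb_nil : forall l, emb R [::] l
| emb_skip : forall a l m, emb R l m -> emb R l (a :: m)
| emb_cons : forall a b l m, R a b -> emb R l m -> emb R (a :: l) (b :: m).

Lemma higman T (R : T -> T -> Prop) : trans R -> wqo R -> wqo (emb R).
Proof.
move=> Tr W; apply: NNPP => /not_all_ex_not [f0 Hf0].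
pose bad (g : nat -> seq T) := ~ good (emb R) g.
pose bf (p : seq (seq T)) := exists g, bad g /\ forall i, (i < size p)%N -> g i = nth [::] p i.
pose P l w := bf l -> bf (rcons l w) /\ forall w', bf (rcons l w') -> (size w <= size w')%N.
have Ptot : forall l, exists w, P l w.
  move=> l; case: (classic (bf l)) => Hl; last by exists [::].
  case: (exists_min (Q := fun n => exists w, size w = n /\ bf (rcons l w))).
    case: Hl => g [Bg Eg]; exists (size (g (size l))), (g (size l)); split => //.
    exists g; split => // i; rewrite size_rcons ltnS leq_eqVlt => /orP [/eqP->|h].
      by rewrite nth_rcons ltnn eqxx.
    by rewrite nth_rcons h Eg.
  move=> n [[w [Ew Bw]] Hmin]; exists w => _; split => // w' Bw'.
  rewrite Ew; apply: Hmin; by exists w'.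
case: (dc [::] Ptot) => M HM.
have BM : forall n, bf (mkseq M n).
  elim=> [|n IH]; first by exists f0; split.
  rewrite mkseqS; exact: (HM n IH).1.
have Mbad : bad M.
  move=> [i [j [Hij E]]]; case: (BM j.+1) => g [Bg Eg]; apply: Bg; exists i, j; split => //.
  rewrite !Eg ?size_mkseq ?nth_mkseq //; lia.
have Mmin : forall n g, bad g -> (forall i, (i < n)%N -> g i = M i) -> (size (M n) <= size (g n))%N.
  move=> n g Bg Eg; apply: ((HM n (BM n)).2 (g n)); exists g; split => // i.
  rewrite size_rcons size_mkseq ltnS leq_eqVlt => /orP [/eqP->|h].
    by rewrite nth_rcons size_mkseq ltnn eqxx.
  by rewrite nth_rcons size_mkseq h nth_mkseq // Eg.
have Mne : forall n, M n <> [::].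
  move=> n En; apply: Mbad; exists n, n.+1; split => //; rewrite En; exact: emb_nil.
have [x0 _] : exists x0 : T, True.
  by case E: (M 0) (Mne 0) => [|a s] // _; exists a.
pose a n := head x0 (M n); pose t n := behead (M n).
have EM : forall n, M n = a n :: t n.
  by move=> n; rewrite /a /t; case: (M n) (Mne n).
case: (wqo_sub Tr W a) => psi [Hpsi Rpsi].
pose k := psi 0.
pose g i := if (i < k)%N then M i else t (psi (i - k)).
have Bg : bad g.
  move=> [i [j [Hij E]]]; rewrite /g in E.
  case: (ltnP j k) => hj.
    rewrite hj (ltn_trans Hij hj) in E; apply: Mbad; by exists i, j.
  rewrite [(j < k)%N]ltnNge hj /= in E.
  case: (ltnP i k) => hi.
    rewrite hi in E; apply: Mbad; exists i, (psi (j - k)); split.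
      apply: (leq_trans hi); rewrite /k; apply: mono_le => //.
    rewrite [M (psi _)]EM; exact: emb_skip.
  rewrite [(i < k)%N]ltnNge hi /= in E.
  apply: Mbad; exists (psi (i - k)), (psi (j - k)); split.
    apply: mono_lt => //; lia.
  rewrite !EM; apply: emb_cons => //; apply: Rpsi; lia.
have := Mmin k g Bg (fun i (hi : (i < k)%N) => ltac:(by rewrite /g hi)).
rewrite /g ltnn subnn /k EM /=; lia.
Qed.

Section B.
Local Open Scope ring_scope.

Definition confz (x y : int) : Prop := (0 <= x /\ x <= y) \/ (x <= 0 /\ y <= x).

Lemma confz_trans : trans confz.
Proof. rewrite /trans /confz => x y z; lia. Qed.

Lemma wqo_confz : wqo confz.
Proof.
pose p (x : int) := absz (Num.max x 0); pose q (x : int) := absz (Num.max (- x) 0).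
apply: (wqo_mono (R := fun x y => (p x <= p y)%N /\ (q x <= q y)%N)).
  rewrite /p /q /confz => x y; lia.
apply: wqo_inter; last exact: wqo_pull wqo_nat.
  rewrite /trans => x y z; lia.
exact: wqo_pull wqo_nat.
Qed.

Variable c : nat.

Definition ccf (a b : 'I_c -> int) : Prop := forall j, confz (a j) (b j).

Lemma ccf_trans : trans ccf.
Proof. move=> x y z H1 H2 j; exact: confz_trans (H1 j) (H2 j). Qed.

Lemma wqo_ccf : wqo ccf.
Proof.
suff H : forall s : seq 'I_c, wqo (fun a b : 'I_c -> int => forall j, j \in s -> confz (a j) (b j)).
  by apply: (wqo_mono _ (H (enum 'I_c))) => a b Hab j; apply: Hab; rewrite mem_enum.
elim=> [|j s IH].
  by move=> f; exists 0%N, 1%N.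
apply: (wqo_mono (R := fun a b => confz (a j) (b j) /\ (forall j, j \in s -> confz (a j) (b j)))).
  move=> a b [H1 H2] k; rewrite inE => /orP [/eqP->//|]; exact: H2.
apply: wqo_inter => //; last exact: wqo_pull wqo_confz.
move=> x y z H1 H2; exact: confz_trans H1 H2.
Qed.

Lemma wqo_emb_ccf : wqo (emb ccf).
Proof. exact: higman ccf_trans wqo_ccf. Qed.

End B.

Definition swap (a b x : nat) := if x == a then b else if x == b then a else x.

Lemma swapK a b : involutive (swap a b).
Proof.
move=> x; rewrite /swap.
case: (eqVneq x a) => [->|xa]; first by rewrite eqxx; case: eqVneq.
case: (eqVneq x b) => [->|xb]; first by rewrite eqxx.
by rewrite (negbTE xa) (negbTE xb).
Qed.

Lemma finperm_swap a b : finperm (swap a b).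
Proof.
split; first exact: inv_bij (swapK a b).
exists (maxn a b).+1 => i Hi; rewrite /swap.
have -> : (i == a) = false by apply/eqP; lia.
have -> : (i == b) = false by apply/eqP; lia.
done.
Qed.

Lemma finperm_comp s t : finperm s -> finperm t -> finperm (t \o s).
Proof.
move=> [bs [N HN]] [bt [M HM]]; split; first exact: bij_comp.
exists (maxn N M) => i Hi /=; rewrite HN ?HM //; lia.
Qed.

Lemma ext_perm n (phi : nat -> nat) :
  (forall k k', (k < n)%N -> (k' < n)%N -> phi k = phi k' -> k = k') ->
  exists s, finperm s /\ forall k, (k < n)%N -> s k = phi k.
Proof.
elim: n => [|n IH] Hinj.
  exists id; split => //; split; first by exists id.
  by exists 0%N.
case: IH => [k k' hk hk' |s [Fs Hs]]; first by apply: Hinj; lia.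
exists (swap (s n) (phi n) \o s); split; first exact: finperm_comp (finperm_swap _ _).
move=> k; rewrite ltnS leq_eqVlt => /orP [/eqP->|hk] /=.
  by rewrite /swap eqxx.
rewrite /comp (Hs k hk) /swap.

have -> : (phi k == s n) = false.
  apply/eqP; rewrite -Hs // => E.
  case: Fs => [[si Hsi _] _]; move: (f_equal si E); rewrite !Hsi; lia.
have -> : (phi k == phi n) = false.
  apply/eqP => E; have := Hinj k n (leq_trans hk (leqnSn _)) (leqnn _) E; lia.
  done.
Qed.

Section C.
Local Open Scope ring_scope.
Variable c : nat.
Variable L : vec c -> Prop.
Hypothesis HL : lattice L.
Hypothesis HS : sym_invariant L.

Lemma vext (x y : vec c) : (forall i j, x i j = y i j) -> x = y.
Proof. move=> H; apply: functional_extensionality => i; apply: functional_extensionality => j; exact: H. Qed.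

Lemma Lext x y : L x -> (forall i j, x i j = y i j) -> L y.
Proof. by move=> Lx /vext <-. Qed.

Lemma L0 : L (vzero c).
Proof. by case: HL => _ []. Qed.

Lemma Lsub x y : L x -> L y -> L (vsub x y).
Proof. by case: HL => _ [] _; apply. Qed.

Lemma Lopp x : L x -> L (fun i j => - x i j).
Proof. move=> Lx; apply: Lext (Lsub L0 Lx) _ => i j; rewrite /vsub /vzero; lia. Qed.

Lemma Ladd x y : L x -> L y -> L (fun i j => x i j + y i j).
Proof. move=> Lx Ly; apply: Lext (Lsub Lx (Lopp Ly)) _ => i j; rewrite /vsub; lia. Qed.

Lemma Lfin x : L x -> finsupp x.
Proof. by case: HL => H _; apply: H. Qed.

Definition conf (h x : vec c) := forall i j, confz (h i j) (x i j).
Definition nz (x : vec c) := exists i j, x i j <> 0.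
Definition graver g := L g /\ nz g /\ forall h, L h -> nz h -> conf h g -> forall i j, h i j = g i j.

Definition nrm N (x : vec c) := (\sum_(i < N) \sum_(j < c) absz (x i j))%N.

Lemma nrm_le N h x : (forall i j, (absz (h i j) <= absz (x i j))%N) -> (nrm N h <= nrm N x)%N.
Proof. move=> H; apply: leq_sum => i _; apply: leq_sum => j _; exact: H. Qed.

Lemma sum_lt (I : finType) (F G : I -> nat) i0 : (forall i, F i <= G i)%N -> (F i0 < G i0)%N ->
  (\sum_i F i < \sum_i G i)%N.
Proof.
move=> H h; rewrite (bigD1 i0) //= [X in (_ < X)%N](bigD1 i0) //= -addSn.
by apply: leq_add => //; apply: leq_sum => i _.
Qed.

Lemma nrm_lt N h x i0 j0 : (forall i j, (absz (h i j) <= absz (x i j))%N) -> (i0 < N)%N ->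
  (absz (h i0 j0) < absz (x i0 j0))%N -> (nrm N h < nrm N x)%N.
Proof.
move=> H Hi0 Hlt; apply: (sum_lt (i0 := Ordinal Hi0)) => [i|].
  by apply: leq_sum => j _.
apply: (sum_lt (i0 := j0)) => // j.
Qed.

Lemma graver_below x : L x -> nz x -> exists g, graver g /\ conf g x.
Proof.
move=> Lx; case: (Lfin Lx) => N HN.
move: (leqnn (nrm N x)); move: {2}(nrm N x) => n.
elim: n x Lx HN => [|n IH] x Lx HN Hn nzx;
 (case: (classic (exists h, L h /\ nz h /\ conf h x /\ exists i j, h i j <> x i j)) =>
   [[h [Lh [nzh [chx [i0 [j0 hne]]]]]]|Hno];
 [ have HNh : forall i j, (N <= i)%N -> h i j = 0 by
     move=> i j hi; move: (chx i j); rewrite HN //; rewrite /confz; lia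
 | exists x; split; last by move=> i j; rewrite /confz; lia ]).
- have hi0 : (i0 < N)%N.
    case: (ltnP i0 N) => // hi; exfalso; apply: hne; rewrite HN // HNh //.
  have := nrm_lt (j0 := j0) _ hi0 (_ : (absz (h i0 j0) < absz (x i0 j0))%N).
  move=> H; have : (nrm N h < nrm N x)%N.
    apply: H; first by move=> i j; move: (chx i j); rewrite /confz; lia.
    move: (chx i0 j0) hne; rewrite /confz; lia.
  lia.
- split => //; split => // h Lh nzh chx i j; apply: NNPP => ne; apply: Hno; exists h.
  by do 3 (split => //); exists i, j.
- have hi0 : (i0 < N)%N.
    case: (ltnP i0 N) => // hi; exfalso; apply: hne; rewrite HN // HNh //.
  have : (nrm N h < nrm N x)%N.
    apply: (nrm_lt (j0 := j0)) hi0 _; first by move=> i j; move: (chx i j); rewrite /confz; lia.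
    move: (chx i0 j0) hne; rewrite /confz; lia.
  move=> hlt; case: (IH h Lh HNh _ nzh) => [|g [Gg cg]]; first lia.
  exists g; split => // i j; exact: confz_trans (cg i j) (chx i j).
- split => //; split => // h Lh nzh chx i j; apply: NNPP => ne; apply: Hno; exists h.
  by do 3 (split => //); exists i, j.
Qed.

Lemma emb_nth T (R : T -> T -> Prop) d l m : emb R l m -> exists phi,
  (forall k, (k < size l)%N -> (phi k < size m)%N /\ R (nth d l k) (nth d m (phi k))) /\
  (forall k k', (k < k')%N -> (k' < size l)%N -> (phi k < phi k')%N).
Proof.
elim => {l m}.
- by move=> l; exists id; split.
- move=> a l m _ [phi [H1 H2]]; exists (fun k => (phi k).+1); split.
    by move=> k hk; case: (H1 k hk).
  by move=> k k' hkk' hk'; rewrite ltnS; apply: H2.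
- move=> a b l m Rab _ [phi [H1 H2]]; exists (fun k => if k is k'.+1 then (phi k').+1 else 0%N); split.
    case=> [|k] //=; rewrite ltnS => hk; by case: (H1 k hk).
  case=> [|k] [|k'] //= hkk' hk'; rewrite ltnS; apply: H2 => //.
Qed.

Definition orb (b g : vec c) := exists s, finperm s /\ act_rel s b g.

Lemma graver_fin : exists n (B : 'I_n -> vec c), (forall k, L (B k)) /\ forall g, graver g -> SymOrbit B g.
Proof.
apply: NNPP => H.
have [bnd Hbnd] : exists bnd : vec c -> nat, forall v, finsupp v -> forall i j, (bnd v <= i)%N -> v i j = 0.
  apply: (choicef (R := fun v N => finsupp v -> forall i j, (N <= i)%N -> v i j = 0)) => v.
  case: (classic (finsupp v)) => [[N HN]|nf]; first by exists N.
  by exists 0%N.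
pose cols (g : vec c) := mkseq (fun i => g i) (bnd g).
pose P (l : seq (vec c)) g := (forall i, (i < size l)%N -> graver (nth (vzero c) l i)) ->
   graver g /\ forall i, (i < size l)%N -> ~ orb (nth (vzero c) l i) g.
have Ptot : forall l, exists g, P l g.
  move=> l; case: (classic (forall i, (i < size l)%N -> graver (nth (vzero c) l i))) => Hl; last first.
    by exists (vzero c).
  apply: NNPP => Hno; apply: H; exists (size l), (fun k : 'I_(size l) => nth (vzero c) l k); split.
    by move=> k; exact: (Hl k (ltn_ord k)).1.
  move=> g Gg; apply: NNPP => Hg; apply: Hno; exists g => _; split => // i hi [s [Fs As]].
  by apply: Hg; exists s, (Ordinal hi); split.
case: (dc (vzero c) Ptot) => G HG.
have GG1 : forall n, graver (G n).
  move=> n; elim: n {-2}n (leqnn n) => [|n IH] m hm;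
    apply: (proj1 (HG m _)) => i; rewrite size_mkseq => hi; rewrite nth_mkseq //; [lia | apply: IH; lia].
have GG2 : forall i n, (i < n)%N -> ~ orb (G i) (G n).
  move=> i n hi.
  have Hpre : forall k, (k < size (mkseq G n))%N -> graver (nth (vzero c) (mkseq G n) k).
    by move=> k; rewrite size_mkseq => hk; rewrite nth_mkseq.
  have := proj2 (HG n Hpre) i; rewrite size_mkseq nth_mkseq //; apply => //.
case: (wqo_emb_ccf (fun n => cols (G n))) => i [j [Hij E]].
case: (emb_nth (fun _ => 0) E) => phi [H1 H2].
rewrite /cols !size_mkseq in H1 H2.
have [s [Fs Hs]] : exists s, finperm s /\ forall k, (k < bnd (G i))%N -> s k = phi k.
  apply: ext_perm => k k' hk hk' Ephi.
  case: (ltngtP k k') => // h; [have := H2 k k' h hk' | have := H2 k' k h hk]; lia.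
have Fs' := Fs; case: Fs' => [[sinv Hs1 Hs2] _].
pose h := fun p jj => G i (sinv p) jj.
have Ah : act_rel s (G i) h by move=> p jj; rewrite /h Hs1.
have Lgi : L (G i) by case: (GG1 i).
have Lh : L h := HS Fs Lgi Ah.
have nzh : nz h.
  case: (GG1 i) => _ [[i0 [j0 ne]] _]; exists (s i0), j0; by rewrite /h Hs1.
have ch : conf h (G j).
  move=> p jj; rewrite /h; case: (ltnP (sinv p) (bnd (G i))) => hk.
    case: (H1 _ hk) => hlt R; move: (R jj); rewrite !nth_mkseq // -Hs // Hs2 //.
  rewrite Hbnd //; first by rewrite /confz; lia.
  exact: Lfin Lgi.
have Eh := (GG1 j).2.2 h Lh nzh ch.
apply: (GG2 i j Hij); exists s; split => // p jj; by rewrite -Eh.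
Qed.

Lemma SymOrbit_L n (B : 'I_n -> vec c) : (forall k, L (B k)) -> forall b, SymOrbit B b -> L b.
Proof. move=> HB b [s [k [Fs A]]]; exact: HS Fs (HB k) A. Qed.

Lemma SymOrbit_ext n (B : 'I_n -> vec c) x y : SymOrbit B x -> (forall i j, x i j = y i j) -> SymOrbit B y.
Proof. by move=> Sx /vext <-. Qed.

Lemma nrm_ind N (P : vec c -> Prop) : (forall x, (forall y, (nrm N y < nrm N x)%N -> P y) -> P x) -> forall x, P x.
Proof.
move=> H x; move: (leqnn (nrm N x)); move: {2}(nrm N x) => k.
elim: k x => [|k IH] x Hx; apply: H => y Hy; [lia | apply: IH; lia].
Qed.

Lemma fs1 (f : int -> int) (x : vec c) : f 0 = 0 -> finsupp x -> @finsupp c (fun i j => f (x i j)).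
Proof. move=> f0 [N HN]; exists N => i j hi; by rewrite HN. Qed.

Lemma fs2 (f : int -> int -> int) (x y : vec c) : f 0 0 = 0 -> finsupp x -> finsupp y ->
  @finsupp c (fun i j => f (x i j) (y i j)).
Proof.
move=> f0 [N HN] [M HM]; exists (maxn N M) => i j hi; rewrite HN ?HM //; lia.
Qed.

Lemma conf_sub g x : conf g x -> conf (vsub x g) x.
Proof. by move=> H i j; move: (H i j); rewrite /vsub /confz; lia. Qed.

Lemma supp_conf N g x : (forall i j, (N <= i)%N -> x i j = 0) -> conf g x ->
  forall i j, (N <= i)%N -> g i j = 0.
Proof. move=> HN H i j hi; move: (H i j); rewrite HN // /confz; lia. Qed.

Lemma nrm_dec N g x : (forall i j, (N <= i)%N -> x i j = 0) -> conf g x -> nz g ->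
  (nrm N (vsub x g) < nrm N x)%N.
Proof.
move=> HN H [i0 [j0 ne]].
have hi0 : (i0 < N)%N.
  case: (ltnP i0 N) => // hi; exfalso; apply: ne; exact: supp_conf HN H _ _ hi.
apply: (nrm_lt (j0 := j0)) hi0 _.
  by move=> i j; move: (H i j); rewrite /vsub /confz; lia.
by move: (H i0 j0) ne; rewrite /vsub /confz; lia.
Qed.

Lemma zero_or_nz x : nz x \/ x = vzero c.
Proof.
case: (classic (nz x)) => h; [by left | right]; apply: vext => i j.
by apply: NNPP => ne; apply: h; exists i, j.
Qed.

Section Bases.
Variable n : nat.
Variable B : 'I_n -> vec c.
Hypothesis HB : forall k, L (B k).
Hypothesis HG : forall g, graver g -> SymOrbit B g.

Lemma markov_of : markov_basis L (SymOrbit B).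
Proof.
split; first exact: SymOrbit_L HB.
move=> u Hu v w Fv Fw.
have Lx : L (vsub v w).
  apply: Lext (Lsub Fw.2 Fv.2) _ => i j; rewrite /vsub; lia.
case: (Lfin Lx) => N HN.
suff key : forall x, forall v, x = vsub v w -> fiber L u v -> L x ->
   (forall i j, (N <= i)%N -> x i j = 0) -> clos_refl_trans (vec c) (edge L (SymOrbit B) u) v w.
  exact: key.
apply: (nrm_ind (N := N)).
clear Lx HN Fv; move=> x IH {}v Ex Fv Lx HN; subst x.
case: (zero_or_nz (vsub v w)) => [nzx|zx]; last first.
  have -> : v = w by apply: vext => i j; move: (f_equal (fun f => f i j) zx); rewrite /vsub /vzero; lia.
  exact: rt_refl.
case: (graver_below Lx nzx) => g [Gg cg].
have Lg : L g by case: Gg.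
pose v' := vsub v g.
have Fv' : fiber L u v'.
  split; first split.
  - exact: fs2 (fun a b => a - b) _ _ _ Fv.1.1 (Lfin Lg).
  - move=> i j; move: (cg i j) (Fv.1.2 i j) (Fw.1.2 i j); rewrite /v' /vsub /confz; lia.
  - apply: Lext (Ladd Fv.2 Lg) _ => i j; rewrite /v' /vsub; lia.
apply: (rt_trans _ _ _ v').
  apply: rt_step; split => //; split => //; left.
  apply: SymOrbit_ext (HG Gg) _ => i j; rewrite /v' /vsub; lia.
apply: (IH (vsub (vsub v w) g)) => //.
- exact: nrm_dec HN cg (proj1 (proj2 Gg)).
- apply: vext => i j; rewrite /v' /vsub; lia.
- exact: Lsub Lx Lg.
- move=> i j hi; have := HN i j hi; have := supp_conf HN cg j hi; rewrite /vsub; lia.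
Qed.

Lemma gen_of : generating_set L (SymOrbit B).
Proof.
split; first exact: SymOrbit_L HB.
move=> x Lx; case: (Lfin Lx) => N HN.
move: x Lx HN; apply: (nrm_ind (N := N)).
move=> x IH Lx HN.
case: (zero_or_nz x) => [nzx|->]; last exact: gen0.
case: (graver_below Lx nzx) => g [Gg cg].
have Lg : L g by case: Gg.
have -> : x = vsub (vsub x g) (vsub (vzero c) g) by apply: vext => i j; rewrite /vsub /vzero; lia.
apply: genS; last by apply: genS; [exact: gen0 | apply: genB; exact: HG].
apply: IH.
- exact: nrm_dec HN cg (proj1 (proj2 Gg)).
- exact: Lsub Lx Lg.
- move=> i j hi; have := HN i j hi; have := supp_conf HN cg j hi; rewrite /vsub; lia.
Qed.

Definition vpos (x : vec c) : vec c := fun i j => Num.max (x i j) 0.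
Definition vneg (x : vec c) : vec c := fun i j => Num.max (- x i j) 0.

Lemma nn_pos (x : vec c) : finsupp x -> nonnegvec (vpos x).
Proof.
move=> fx; split; first exact: fs1 (fun a => Num.max a 0) _ _ fx.
by move=> i j; rewrite /vpos; lia.
Qed.

Lemma nn_neg (x : vec c) : finsupp x -> nonnegvec (vneg x).
Proof.
move=> fx; split; first exact: fs1 (fun a => Num.max (- a) 0) _ _ fx.
by move=> i j; rewrite /vneg; lia.
Qed.

Lemma nn_add (x y : vec c) : nonnegvec x -> nonnegvec y -> nonnegvec (vadd x y).
Proof.
move=> [fx px] [fy py]; split; first exact: fs2 (fun a b => a + b) _ _ _ fx fy.
by move=> i j; move: (px i j) (py i j); rewrite /vadd; lia.
Qed.

Lemma vaddC (x y : vec c) : vadd x y = vadd y x.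
Proof. by apply: vext => i j; rewrite /vadd addrC. Qed.

Lemma Qlem prec : term_order prec -> forall x, L x -> prec (vneg x) (vpos x) ->
  exists g, graver g /\ conf g x /\ prec (vneg g) (vpos g).
Proof.
case=> [Irr [Tr [Tot [Add WO]]]] x Lx; case: (Lfin Lx) => N HN.
move: x Lx HN; apply: (nrm_ind (N := N)) => x IH Lx HN Hp.
have fx := Lfin Lx.
case: (zero_or_nz x) => [nzx|zx]; last first.
  exfalso; apply: (Irr (vpos x)); first exact: nn_pos.
  suff E : vneg x = vpos x by rewrite {1}E in Hp.
  by apply: vext => i j; rewrite /vneg /vpos zx /vzero; lia.
case: (graver_below Lx nzx) => g [Gg cg].
have Lg : L g by case: Gg.
have fg := Lfin Lg.
case: (classic (prec (vneg g) (vpos g))) => Hg; first by exists g.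
pose y := vsub x g.
have Ly : L y := Lsub Lx Lg.
have fy := Lfin Ly.
have Hy : prec (vneg y) (vpos y).
  apply: NNPP => Hny.
  have le1 : prec (vpos y) (vneg y) \/ vpos y = vneg y.
    case: (Tot (vpos y) (vneg y) (nn_pos fy) (nn_neg fy)) => [|[|]]; tauto.
  have le2 : prec (vpos g) (vneg g) \/ vpos g = vneg g.
    case: (Tot (vpos g) (vneg g) (nn_pos fg) (nn_neg fg)) => [|[|]]; tauto.
  have Ex1 : vpos x = vadd (vpos y) (vpos g).
    by apply: vext => i j; move: (cg i j); rewrite /vpos /vadd /y /vsub /confz; lia.
  have Ex2 : vneg x = vadd (vneg y) (vneg g).
    by apply: vext => i j; move: (cg i j); rewrite /vneg /vadd /y /vsub /confz; lia.
  have la : prec (vadd (vpos y) (vpos g)) (vadd (vneg y) (vpos g)) \/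
            vadd (vpos y) (vpos g) = vadd (vneg y) (vpos g).
    case: le1 => [h|->]; [left; apply: Add => //; by [apply: nn_pos|apply: nn_neg] | by right].
  have lb : prec (vadd (vneg y) (vpos g)) (vadd (vneg y) (vneg g)) \/
            vadd (vneg y) (vpos g) = vadd (vneg y) (vneg g).
    rewrite (vaddC _ (vpos g)) (vaddC _ (vneg g)).
    case: le2 => [h|->]; [left; apply: Add => //; by [apply: nn_pos|apply: nn_neg] | by right].
  have nA := nn_add (nn_pos fy) (nn_pos fg).
  have nB := nn_add (nn_neg fy) (nn_pos fg).
  have nC := nn_add (nn_neg fy) (nn_neg fg).
  rewrite Ex1 Ex2 in Hp.
  apply: (Irr _ nC).
  case: la => [ha|ea]; case: lb => [hb|eb].
  - exact: (Tr _ _ _ nC nA nC Hp (Tr _ _ _ nA nB nC ha hb)).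
  - move: Hp; rewrite -eb => Hp; exact: (Tr _ _ _ nB nA nB Hp ha).
  - rewrite ea in Hp; exact: (Tr _ _ _ nC nB nC Hp hb).
  - by rewrite ea eb in Hp.
case: (IH y _ Ly _ Hy) => [||g' [Gg' [cg' Hg']]].
- exact: nrm_dec HN cg (proj1 (proj2 Gg)).
- move=> i j hi; have := HN i j hi; have := supp_conf HN cg j hi; rewrite /y /vsub; lia.
exists g'; split => //; split => // i j.
exact: confz_trans (cg' i j) (conf_sub cg i j).
Qed.

Lemma gb_of prec : term_order prec -> groebner_basis L (SymOrbit B) prec.
Proof.
move=> Hto; have Hto' := Hto; case: Hto' => [Irr [Tr [Tot [Add WO]]]].
split; first exact: SymOrbit_L HB.
move=> u Hu m Fm Mmin.
suff Hall : forall v, fiber L u v -> clos_refl_trans (vec c) (dedge L (SymOrbit B) prec u) v m.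
  apply: Hall; split => //; apply: Lext L0 _ => i j; rewrite /vsub /vzero; lia.
move=> v0 Fv0; apply: NNPP => Hn.
case: (WO (fun v => fiber L u v /\ ~ clos_refl_trans (vec c) (dedge L (SymOrbit B) prec u) v m)).
- by move=> v [[]].
- by exists v0.
move=> v [[Fv Hnv] Hmin]; apply: Hnv.
have fv := Fv.1.1; have fm := Fm.1.1.
pose x := vsub v m.
have Lx : L x by apply: Lext (Lsub Fm.2 Fv.2) _ => i j; rewrite /x /vsub; lia.
have fx := Lfin Lx.
case: (classic (forall i j, v i j = m i j)) => Evm.
  rewrite (vext Evm); exact: rt_refl.
have Hmv : prec m v.
  case: (Tot m v Fm.1 Fv.1) => [//|[Eq|Hvm]].
  - by exfalso; apply: Evm => i j; rewrite Eq.
  - by exfalso; apply: (Mmin v Fv Hvm).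
have Hx : prec (vneg x) (vpos x).
  apply: NNPP => Hnx.
  have le1 : prec (vpos x) (vneg x) \/ vpos x = vneg x.
    case: (Tot (vpos x) (vneg x) (nn_pos fx) (nn_neg fx)) => [|[|]]; tauto.
  pose r : vec c := fun i j => v i j - vpos x i j.
  have nr : nonnegvec r.
    split; first exact: fs2 (fun a b => a - b) _ _ _ fv (nn_pos fx).1.
    by move=> i j; move: (Fm.1.2 i j) (Fv.1.2 i j); rewrite /r /vpos /x /vsub; lia.
  have Ev : v = vadd (vpos x) r by apply: vext => i j; rewrite /vadd /r; lia.
  have Em : m = vadd (vneg x) r.
    by apply: vext => i j; rewrite /vadd /r /vpos /vneg /x /vsub; lia.
  case: le1 => [h|e].
  - have := Add _ _ _ (nn_pos fx) (nn_neg fx) nr h; rewrite -Ev -Em => h2.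
    exact: (Irr m Fm.1 (Tr _ _ _ Fm.1 Fv.1 Fm.1 Hmv h2)).
  - by apply: Evm => i j; rewrite Ev Em e.
case: (Qlem Hto Lx Hx) => g [Gg [cg Hg]].
have Lg : L g by case: Gg.
have fg := Lfin Lg.
pose v' := vsub v g.
pose r : vec c := fun i j => v i j - vpos g i j.
have nr : nonnegvec r.
  split; first exact: fs2 (fun a b => a - b) _ _ _ fv (nn_pos fg).1.
  by move=> i j; move: (Fm.1.2 i j) (Fv.1.2 i j) (cg i j); rewrite /r /vpos /x /vsub /confz; lia.
have Ev : v = vadd (vpos g) r by apply: vext => i j; rewrite /vadd /r; lia.
have Ev' : v' = vadd (vneg g) r.
  by apply: vext => i j; rewrite /vadd /r /vpos /vneg /v' /vsub; lia.
have Hpv : prec v' v.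
  by rewrite Ev' {1}Ev; apply: Add => //; [apply: nn_neg | apply: nn_pos].
have Fv' : fiber L u v'.
  split; first split.
  - exact: fs2 (fun a b => a - b) _ _ _ fv fg.
  - by move=> i j; move: (Fm.1.2 i j) (Fv.1.2 i j) (cg i j); rewrite /v' /x /vsub /confz; lia.
  - apply: Lext (Ladd Fv.2 Lg) _ => i j; rewrite /v' /vsub; lia.
apply: (rt_trans _ _ _ v').
  apply: rt_step; split => //; split => //; split => //; left.
  apply: SymOrbit_ext (HG Gg) _ => i j; rewrite /v' /vsub; lia.
apply: NNPP => hn'; exact: (Hmin v' (conj Fv' hn') Hpv).
Qed.

End Bases.

End C.

Unset Implicit Arguments.

Theorem corollary4p3 (c : nat) (hc : (0 < c)%N) (L : vec c -> Prop) :
  lattice L -> sym_invariant L ->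
  (exists (n : nat) (B : 'I_n -> vec c), universal_groebner_basis L (SymOrbit B)) /\
  (forall prec : vec c -> vec c -> Prop, term_order prec ->
     exists (n : nat) (B : 'I_n -> vec c), groebner_basis L (SymOrbit B) prec) /\
  (exists (n : nat) (B : 'I_n -> vec c), markov_basis L (SymOrbit B)) /\
  (exists (n : nat) (B : 'I_n -> vec c), generating_set L (SymOrbit B)).
Proof.
move=> HL HS.
case: (graver_fin HL HS) => n [B [HB HG]].
split; first by exists n, B => prec Hp; exact: gb_of.
split; first by move=> prec Hp; exists n, B; exact: gb_of.
split; first by exists n, B; exact: markov_of.
by exists n, B; exact: gen_of.
Qed.
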